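(* Let $\mathcal{C}\subset\mathbb{R}^n$ be closed and Clarke regular, $f:\mathbb{R}^n\to\mathbb{R}^n$ continuous and $G:\mathcal{C}\to\mathbb{S}^n_+$ a continuous metric, with $\gamma\ge\sup_{x\in\mathcal{C}}\|f(x)\|_{G(x)}$ finite. Then the inclusion $\dot x\in F(x):=f(x)-N^G_x\mathcal{C}\cap\gamma\mathbb{B}$, $x\in\mathcal{C}$, is well-posed.
   Context: $\mathbb{B}$ is the closed unit ball; $\|u\|_{G(x)}:=(u^TG(x)u)^{1/2}$. $T_x\mathcal{C}$ is the tangent cone ($v\in T_x\mathcal{C}$ iff $x_k\to x$ in $\mathcal{C}$, $\delta_k\to0^+$ with $(x_k-x)/\delta_k\to v$); Clarke regular means $x\mapsto T_x\mathcal{C}$ is inner semicontinuous. $N^G_x\mathcal{C}:=\{\eta:\eta^TG(x)v\le0\ \forall v\in T_x\mathcal{C}\}$. An inclusion $\dot x\in H(x)$, $x\in\mathcal{C}$, is well-posed if $\mathcal{C}$ is closed, $H$ is outer semicontinuous and locally bounded relative to $\mathcal{C}$, and $H(x)$ is non-empty and convex for all $x\in\mathcal{C}$. *)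

(* Defs.v *)
From HB Require Import structures.
From mathcomp Require Import all_boot all_order all_algebra.
From mathcomp Require Import all_classical all_reals all_analysis.
Set Implicit Arguments. Unset Strict Implicit. Unset Printing Implicit Defensive.
Import Order.TTheory GRing.Theory Num.Theory.
Import numFieldNormedType.Exports.
Local Open Scope classical_set_scope.
Local Open Scope ring_scope.

Section Defs.
Variables (R : realType) (n : nat).
Notation vec := 'rV[R]_n.

Definition qform (A : 'M[R]_n) (u v : vec) : R := (u *m A *m v^T) 0 0.

Definition enorm (u : vec) : R := Num.sqrt ((u *m u^T) 0 0).

Definition Gnorm (A : 'M[R]_n) (u : vec) : R := Num.sqrt (qform A u u).

Definition scaled_ball (g : R) : set vec := [set u | enorm u <= g].

Definition spd (A : 'M[R]_n) : Prop :=
  A^T = A /\ forall u : vec, u != 0 -> 0 < qform A u u.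

Definition tangent_cone (C : set vec) (x : vec) : set vec :=
  [set v | exists (xk : nat -> vec) (dk : nat -> R),
      (forall k, C (xk k)) /\ xk @ \oo --> x /\
      (forall k, 0 < dk k) /\ dk @ \oo --> (0 : R) /\
      (fun k => (dk k)^-1 *: (xk k - x)) @ \oo --> v].

Definition inner_semicontinuous_on (C : set vec) (H : vec -> set vec) : Prop :=
  forall x, C x -> forall v, H x v -> forall e : R, 0 < e ->
    exists2 d : R, 0 < d & forall y, C y -> ball x d y ->
      exists w, H y w /\ ball v e w.

Definition clarke_regular (C : set vec) : Prop :=
  inner_semicontinuous_on C (tangent_cone C).

Definition normal_cone (G : vec -> 'M[R]_n) (C : set vec) (x : vec) : set vec :=
  [set eta | forall v, tangent_cone C x v -> qform (G x) eta v <= 0].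

Definition outer_semicontinuous_on (C : set vec) (H : vec -> set vec) : Prop :=
  forall (xk yk : nat -> vec) (x y : vec),
    (forall k, C (xk k)) -> C x -> (forall k, H (xk k) (yk k)) ->
    xk @ \oo --> x -> yk @ \oo --> y -> H x y.

Definition locally_bounded_on (C : set vec) (H : vec -> set vec) : Prop :=
  forall x, C x -> exists2 d : R, 0 < d & exists M : R,
    forall y, C y -> ball x d y -> forall z, H y z -> enorm z <= M.

Definition convex_set_of (A : set vec) : Prop :=
  forall a b, A a -> A b -> forall t : R, 0 <= t <= 1 ->
    A (t *: a + (1 - t) *: b).

Definition well_posed (C : set vec) (H : vec -> set vec) : Prop :=
  closed C /\ outer_semicontinuous_on C H /\ locally_bounded_on C H /\
  (forall x, C x -> H x !=set0 /\ convex_set_of (H x)).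

Definition proj_inclusion (f : vec -> vec) (G : vec -> 'M[R]_n) (C : set vec)
    (g : R) (x : vec) : set vec :=
  [set f x - eta | eta in normal_cone G C x `&` scaled_ball g].

End Defs.

(* Main.v *)
Require Import Defs.
From HB Require Import structures.
From mathcomp Require Import all_boot all_order all_algebra.
From mathcomp Require Import all_classical all_reals all_analysis.
From mathcomp Require Import ring lra.
Import Order.TTheory GRing.Theory Num.Theory.
Import numFieldNormedType.Exports.
Local Open Scope classical_set_scope.
Local Open Scope ring_scope.
Set Implicit Arguments.

Section H.
Variables (R : realType).

Lemma entry_cvg (p q : nat) T (F : set_system T) (FF : Filter F)
   (u : T -> 'M[R]_(p,q)) (M : 'M[R]_(p,q)) i j :
  u @ F --> M -> (fun k => u k i j) @ F --> M i j.
Proof.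
move=> /cvg_ballP uM; apply/cvg_ballP => e e0.
by apply: filterS (uM e e0) => k [_]; apply.
Qed.

Lemma qformE n (A : 'M[R]_n) u v :
  qform A u v = \sum_i \sum_j u 0 i * A i j * v 0 j.
Proof.
rewrite /qform mxE.
under eq_bigr do rewrite !mxE big_distrl /=.
rewrite exchange_big /=; apply: eq_bigr => i _.
by apply: eq_bigr => j _; rewrite ?mxE.
Qed.

Lemma qform_cvg n T (F : set_system T) (FF : Filter F)
  (A : T -> 'M[R]_n) (u v : T -> 'rV[R]_n) A0 u0 v0 :
  A @ F --> A0 -> u @ F --> u0 -> v @ F --> v0 ->
  (fun k => qform (A k) (u k) (v k)) @ F --> qform A0 u0 v0.
Proof.
move=> cA cu cv.
rewrite qformE; under eq_cvg do rewrite qformE.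
apply: cvg_big => //; first exact: add_continuous.
move=> i _; apply: cvg_big => //; first exact: add_continuous.
move=> j _; apply: cvgM; [apply: cvgM|]; exact: entry_cvg.
Qed.

Lemma sqE n (u : 'rV[R]_n) : (u *m u^T) 0 0 = qform 1 u u.
Proof. by rewrite /qform mulmx1. Qed.

Lemma sq_sum n (u : 'rV[R]_n) : (u *m u^T) 0 0 = \sum_i u 0 i ^+ 2.
Proof. by rewrite mxE; apply: eq_bigr => i _; rewrite !mxE expr2. Qed.

Lemma sq_ge0 n (u : 'rV[R]_n) : 0 <= (u *m u^T) 0 0.
Proof. by rewrite sq_sum; apply: sumr_ge0 => i _; exact: sqr_ge0. Qed.

Lemma enorm_le n (u : 'rV[R]_n) g :
  enorm u <= g <-> 0 <= g /\ (u *m u^T) 0 0 <= g ^+ 2.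
Proof.
rewrite /enorm; split.
  move=> H; have h0 := sqrtr_ge0 ((u *m u^T) 0 0).
  split; first exact: le_trans h0 H.
  rewrite -[X in X <= _](sqr_sqrtr (sq_ge0 u)).
  by rewrite lerXn2r // ?nnegrE //; exact: le_trans h0 H.
case=> g0 H; apply: le_trans (ler_wsqrtr H) _.
by rewrite sqrtr_sqr ger0_norm.
Qed.

Lemma sq_sub n (a b : 'rV[R]_n) :
  ((a - b) *m (a - b)^T) 0 0 <= 2 * (a *m a^T) 0 0 + 2 * (b *m b^T) 0 0.
Proof.
rewrite !sq_sum !mulr_sumr -big_split /=; apply: ler_sum => i _.
rewrite !mxE; have := sqr_ge0 (a 0 i + b 0 i); nra.
Qed.

Lemma sq_conv n (a b : 'rV[R]_n) t : 0 <= t <= 1 ->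
  ((t *: a + (1 - t) *: b) *m (t *: a + (1 - t) *: b)^T) 0 0 <=
   t * (a *m a^T) 0 0 + (1 - t) * (b *m b^T) 0 0.
Proof.
case/andP=> t0 t1.
rewrite !sq_sum !mulr_sumr -big_split /=; apply: ler_sum => i _.
rewrite !mxE.
have h : 0 <= t * (1 - t) * (a 0 i - b 0 i) ^+ 2.
  by apply: mulr_ge0; [apply: mulr_ge0; lra | exact: sqr_ge0].
nra.
Qed.

Lemma qform_lin n (A : 'M[R]_n) a b v t s :
  qform A (t *: a + s *: b) v = t * qform A a v + s * qform A b v.
Proof.
rewrite !qformE !mulr_sumr -big_split /=; apply: eq_bigr => i _.
rewrite !mulr_sumr -big_split /=; apply: eq_bigr => j _.
rewrite !mxE; ring.
Qed.

End H.
Theorem lemma2p12 (R : realType) (n : nat) (C : set 'rV[R]_n)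
    (f : 'rV[R]_n -> 'rV[R]_n) (G : 'rV[R]_n -> 'M[R]_n) (gamma : R) :
  closed C -> clarke_regular C ->
  continuous f ->
  {within C, continuous G} -> (forall x, C x -> spd (G x)) ->
  (forall x, C x -> Gnorm (G x) (f x) <= gamma) ->
  well_posed C (proj_inclusion f G C gamma).
Proof.
move=> Ccl Creg fc Gc Gspd fg.
have g0 : forall x, C x -> 0 <= gamma.
  by move=> x Cx; apply: le_trans (fg x Cx); exact: sqrtr_ge0.
split; first done.
split; [|split].
- move=> xk yk x y Cxk Cx Hk cx cy.
  have Ek : forall k, normal_cone G C (xk k) (f (xk k) - yk k) /\
                      scaled_ball gamma (f (xk k) - yk k).
    move=> k; case: (Hk k) => e [Ne Be] <-.
    by rewrite opprB addrC subrK.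
  have ce : (fun k => f (xk k) - yk k) @ \oo --> f x - y.
    by apply: cvgB => //; apply: (cvg_comp _ _ cx); exact: fc.
  have cG : (G \o xk) @ \oo --> G x.
    have cGx : G @ within C (nbhs x) --> G x.
      by move: Gc; rewrite /from_subspace => /subspace_continuousP; apply.
    have cxw : xk @ \oo --> within C (nbhs x).
      move=> P /= Wp.
      have H : \forall k \near \oo, C (xk k) -> P (xk k) := cx _ Wp.
      by apply: filterS H => k; apply; exact: Cxk.
    exact: (cvg_comp xk G cxw cGx).
  exists (f x - y); last by rewrite opprB addrC subrK.
  split.
  + move=> v Tv; rewrite leNgt; apply/negP => q0.
    have cq : (fun p : nat * 'rV[R]_n =>
        qform (G (xk p.1)) (f (xk p.1) - yk p.1) p.2) @ filter_prod \oo (nbhs v)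
        --> qform (G x) (f x - y) v.
      apply: qform_cvg.
      * exact: (cvg_comp fst _ cvg_fst cG).
      * exact: (cvg_comp fst _ cvg_fst ce).
      * exact: cvg_snd.
    have q20 : 0 < qform (G x) (f x - y) v / 2 by rewrite divr_gt0.
    case: (cvg_ball cq q20) => -[P Q] [/= FP GQ] sub.
    case/nbhs_ballP: GQ => e e0 bQ.
    have [d d0 Hd] := Creg x Cx v Tv e e0.
    have [k [Pk Bk]] := filter_ex (filterI FP (cvg_ball cx d0)).
    have [w [Tw bw]] := Hd (xk k) (Cxk k) Bk.
    move: q0; have := (Ek k).1 w Tw.
    have := sub (k, w) (conj Pk (bQ w bw)).
    rewrite /ball /=.
    set q := qform (G x) _ _; set r := qform _ _ _ => H1 H2 H0.
    have := ler_norm (q - r); lra.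
  + have gg : 0 <= gamma := g0 x Cx.
    rewrite /scaled_ball /= enorm_le; split => //.
    rewrite sqE.
    have hn : \forall k \near \oo,
        [set r : R | r <= gamma ^+ 2] (qform 1 (f (xk k) - yk k) (f (xk k) - yk k)).
      apply: nearW => k; rewrite /= -sqE.
      by have /enorm_le [] := (Ek k).2.
    have hc : (fun k => qform 1 (f (xk k) - yk k) (f (xk k) - yk k)) @ \oo
        --> qform 1 (f x - y) (f x - y).
      by apply: qform_cvg => //; exact: cvg_cst.
    exact: (closed_cvg _ (@closed_le _ (gamma ^+ 2)) hn _ hc).
- move=> x Cx.
  have cs : (fun y => qform 1 (f y) (f y)) @ nbhs x --> qform 1 (f x) (f x).
    exact: (qform_cvg _ (cvg_cst (1 : 'M[R]_n)) (fc x) (fc x)).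
  have hb : nbhs x (fun y => ball (qform 1 (f x) (f x)) 1 (qform 1 (f y) (f y))).
    by apply: (cvg_ball cs); exact: ltr01.
  have [d d0 Hd] := (nbhs_ballP x _).1 hb.
  exists d => //.
  exists (Num.sqrt (2 * (qform 1 (f x) (f x) + 1) + 2 * gamma ^+ 2)).
  move=> y Cy bxy z [eta [Neta Beta] <-].
  rewrite /enorm; apply: ler_wsqrtr.
  apply: le_trans; first exact: sq_sub.
  have /enorm_le [_ Be] := Beta.
  rewrite sqE in Be; rewrite !sqE.
  have := Hd y bxy; rewrite /ball /=.
  set s := qform 1 (f x) (f x); set s' := qform 1 (f y) (f y) => H.
  have : s' - s <= `|s - s'| by rewrite distrC ler_norm.
  lra.
- move=> x Cx; split.
  + exists (f x - 0); exists 0; last by [].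
    split.
      by move=> v _; rewrite /qform !mul0mx mxE.
    rewrite /scaled_ball /= enorm_le; split; first exact: g0 x Cx.
    by rewrite mul0mx mxE sqr_ge0.
  + move=> a b [ea [Na Ba] <-] [eb [Nb Bb] <-] t /andP[t0 t1].
    exists (t *: ea + (1 - t) *: eb).
      split.
        move=> v Tv; rewrite qform_lin.
        have := Na v Tv; have := Nb v Tv.
        set p := qform _ ea v; set q := qform _ eb v => H1 H2.
        have : 0 <= 1 - t by lra.
        nra.
      rewrite /scaled_ball /= enorm_le.
      have /enorm_le [gg Ha] := Ba; have /enorm_le [_ Hb] := Bb.
      split => //.
      apply: le_trans; first by apply: sq_conv; rewrite t0 t1.
      have : 0 <= 1 - t by lra.
      nra.
    by apply/rowP => i; rewrite !mxE; ring.
Qed.
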